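(* Let $I=\{1,2\}$, $A=\{x,y\}$ with $x\ne y$, let $\mathcal C=\mathcal C(I,A,(\rho_i)_{i\in I},(C^a)_{a\in A})$ be a Cartan scheme with $\rho_1(x)=y$, $\rho_1(y)=x$, $\rho_2=\mathrm{id}_A$, and let $\mathcal R=\mathcal R(\mathcal C,(R^a)_{a\in A})$ be a root system of type $\mathcal C$. Then $\mathcal R$ is finite if and only if, up to interchanging $x$ and $y$, one of the following holds: (1) $C^x=C^y$ is of finite type $A_1\times A_1$, $B_2$ or $G_2$, i.e. $c^x_{12}=c^x_{21}=0$ or $c^x_{12}c^x_{21}\in\{2,3\}$; (2) $c^x_{12}=c^y_{12}=-1$, $c^x_{21}=-3$ and $c^y_{21}\in\{-4,-5\}$. In case (1), $R^x=R^y$ is the usual set of roots of the generalized Cartan matrix $C^x=C^y$. In case (2), writing $1^m2^n$ for $m\alpha_1+n\alpha_2$ (exponents $1$ and factors with exponent $0$ omitted), one has, if $c^y_{21}=-4$: $R^x_+=\{1,2,12,12^2,12^3,1^22^3,1^32^4,1^32^5\}$, $R^y_+=\{1,2,12,12^2,12^3,12^4,1^22^3,1^22^5\}$; and if $c^y_{21}=-5$: $R^x_+=\{1,2,12,12^2,12^3,1^22^3,1^32^4,1^32^5,1^42^5,1^42^7,1^52^7,1^52^8\}$, $R^y_+=\{1,2,12,12^2,12^3,12^4,12^5,1^22^3,1^22^5,1^22^7,1^32^7,1^32^8\}$.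
   Context: Let $\{\alpha_i\mid i\in I\}$ be the standard basis of $\mathbb Z^I$; $\mathbb N_0=\{0,1,2,\dots\}$. A generalized Cartan matrix is $C=(c_{ij})_{i,j\in I}\in\mathbb Z^{I\times I}$ with $c_{ii}=2$, $c_{jk}\le0$ for $j\ne k$, and $c_{ij}=0\Rightarrow c_{ji}=0$. A Cartan scheme $\mathcal C=\mathcal C(I,A,(\rho_i)_{i\in I},(C^a)_{a\in A})$ consists of a nonempty set $A$, maps $\rho_i:A\to A$ and generalized Cartan matrices $C^a=(c^a_{jk})_{j,k\in I}$ such that (C1) $\rho_i^2=\mathrm{id}$ and (C2) $c^a_{ij}=c^{\rho_i(a)}_{ij}$ for all $a\in A$, $i,j\in I$. For $i\in I$, $a\in A$ let $\sigma_i^a\in\mathrm{Aut}(\mathbb Z^I)$, $\sigma_i^a(\alpha_j)=\alpha_j-c^a_{ij}\alpha_i$. A root system of type $\mathcal C$ is a family $\mathcal R=\mathcal R(\mathcal C,(R^a)_{a\in A})$ of subsets $R^a\subset\mathbb Z^I$ such that, writing $R^a_+=R^a\cap\mathbb N_0^I$ and $m^a_{i,j}=|R^a\cap(\mathbb N_0\alpha_i+\mathbb N_0\alpha_j)|$, for all $a\in A$, $i,j\in I$: (R1) $R^a=R^a_+\cup(-R^a_+)$; (R2) $R^a\cap\mathbb Z\alpha_i=\{\alpha_i,-\alpha_i\}$; (R3) $\sigma_i^a(R^a)=R^{\rho_i(a)}$; (R4) if $i\neq j$ and $m^a_{i,j}$ is finite then $(\rho_i\rho_j)^{m^a_{i,j}}(a)=a$.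 It is finite if every $R^a$ is finite. *)

(* Defs.v *)
From HB Require Import structures.
From mathcomp Require Import all_boot all_order all_algebra.
Set Implicit Arguments. Unset Strict Implicit. Unset Printing Implicit Defensive.
Import Order.TTheory GRing.Theory Num.Theory.
Local Open Scope ring_scope.

Definition zvec (I : finType) := {ffun I -> int}.

Definition alpha (I : finType) (i : I) : zvec I := [ffun j => ((i == j) : nat)%:Z].

Definition nonneg (I : finType) (v : zvec I) : Prop := forall j, 0 <= v j.

Definition is_gcm (I : finType) (c : I -> I -> int) : Prop :=
  [/\ forall i, c i i = 2,
      forall j k, j != k -> c j k <= 0
    & forall i j, c i j = 0 -> c j i = 0].

Definition cartan_scheme (I : finType) (A : Type)
  (rho : I -> A -> A) (C : A -> I -> I -> int) : Prop :=
  [/\ forall a, is_gcm (C a),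
      forall i a, rho i (rho i a) = a
    & forall a i j, C a i j = C (rho i a) i j].

Definition sigma (I : finType) (A : Type) (C : A -> I -> I -> int)
  (i : I) (a : A) (v : zvec I) : zvec I :=
  v - alpha i *~ (\sum_(j : I) C a i j * v j).

Definition root_system (I : finType) (A : Type)
  (rho : I -> A -> A) (C : A -> I -> I -> int) (R : A -> zvec I -> Prop) : Prop :=
  [/\ forall a v, R a v <-> ((R a v /\ nonneg v) \/ (R a (- v) /\ nonneg (- v))),
      forall a i v, (R a v /\ exists k : int, v = alpha i *~ k) <->
                               (v = alpha i \/ v = - alpha i),
      forall a i v, R (rho i a) v <-> exists2 w, R a w & v = sigma C i a w
    & forall a i j, i != j ->
         forall s : seq (zvec I), uniq s ->
         (forall v, v \in s <-> (R a v /\ exists m n : nat, v = alpha i *+ m + alpha j *+ n)) ->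
         iter (size s) (fun b => rho i (rho j b)) a = a].

Definition finite_root_system (I : finType) (A : Type) (R : A -> zvec I -> Prop) : Prop :=
  forall a, exists s : seq (zvec I), forall v, R a v <-> v \in s.

(* The usual (real) roots of a generalized Cartan matrix c: the orbit of the simple
   roots under the Weyl group generated by the simple reflections s_i. *)
Definition refl (I : finType) (c : I -> I -> int) (i : I) (v : zvec I) : zvec I :=
  v - alpha i *~ (\sum_(j : I) c i j * v j).
Definition usual_roots (I : finType) (c : I -> I -> int) (v : zvec I) : Prop :=
  exists (w : seq I) (j : I), v = foldr (refl c) (alpha j) w.

Definition i1 : 'I_2 := @Ordinal 2 0 isT.
Definition i2 : 'I_2 := @Ordinal 2 1 isT.

Definition r12 (m n : nat) : zvec 'I_2 := alpha i1 *+ m + alpha i2 *+ n.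

Definition case1 (A : Type) (C : A -> 'I_2 -> 'I_2 -> int) (u v : A) : Prop :=
  C u = C v /\
  ((C u i1 i2 = 0 /\ C u i2 i1 = 0) \/ C u i1 i2 * C u i2 i1 = 2 \/ C u i1 i2 * C u i2 i1 = 3).

Definition case2 (A : Type) (C : A -> 'I_2 -> 'I_2 -> int) (u v : A) : Prop :=
  [/\ C u i1 i2 = -1, C v i1 i2 = -1, C u i2 i1 = -3 & (C v i2 i1 = -4 \/ C v i2 i1 = -5)].

Definition Rx4 : seq (zvec 'I_2) :=
  [:: r12 1 0; r12 0 1; r12 1 1; r12 1 2; r12 1 3; r12 2 3; r12 3 4; r12 3 5].
Definition Ry4 : seq (zvec 'I_2) :=
  [:: r12 1 0; r12 0 1; r12 1 1; r12 1 2; r12 1 3; r12 1 4; r12 2 3; r12 2 5].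
Definition Rx5 : seq (zvec 'I_2) :=
  [:: r12 1 0; r12 0 1; r12 1 1; r12 1 2; r12 1 3; r12 2 3; r12 3 4; r12 3 5;
      r12 4 5; r12 4 7; r12 5 7; r12 5 8].
Definition Ry5 : seq (zvec 'I_2) :=
  [:: r12 1 0; r12 0 1; r12 1 1; r12 1 2; r12 1 3; r12 1 4; r12 1 5; r12 2 3;
      r12 2 5; r12 2 7; r12 3 7; r12 3 8].

Definition pos_roots_are (A : Type) (R : A -> zvec 'I_2 -> Prop) (a : A)
  (s : seq (zvec 'I_2)) : Prop :=
  forall v, (R a v /\ nonneg v) <-> v \in s.

(* Main.v *)
Require Import Defs.
From mathcomp Require Import all_boot all_order all_algebra.
From Stdlib Require Import Classical FunctionalExtensionality.
From HB Require Import structures.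
From mathcomp Require Import all_boot all_order all_algebra zify ring lra.
Set Implicit Arguments. Unset Strict Implicit. Unset Printing Implicit Defensive.
Import Order.TTheory GRing.Theory Num.Theory.
Local Open Scope ring_scope.

Definition vec (p : int * int) : zvec 'I_2 := [ffun j : 'I_2 => if j == i1 then p.1 else p.2].
Definition pv (v : zvec 'I_2) : int * int := (v i1, v i2).

Lemma ord2 (j : 'I_2) : j = i1 \/ j = i2.
Proof. case: j => [[|[|k]] Hk]; [left|right|by []]; exact: val_inj. Qed.

Lemma pvK v : vec (pv v) = v.
Proof. apply/ffunP => j; rewrite ffunE; by case: (ord2 j) => ->. Qed.
Lemma vecK p : pv (vec p) = p.
Proof. by case: p => p q; rewrite /pv !ffunE. Qed.
Lemma pv_inj : injective pv.
Proof. by move=> u v e; rewrite -(pvK u) e pvK. Qed.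

Lemma pv_alpha1 : pv (alpha i1) = (1, 0).
Proof. by rewrite /pv !ffunE. Qed.
Lemma pv_alpha2 : pv (alpha i2) = (0, 1).
Proof. by rewrite /pv !ffunE. Qed.
Lemma pv_r12 m n : pv (r12 m n) = (m%:Z, n%:Z).
Proof. rewrite /pv /r12 !ffunE !ffunMnE !ffunE /=. congr (_, _); lia. Qed.

Lemma sum2 (F : 'I_2 -> int) : \sum_(j : 'I_2) F j = F i1 + F i2.
Proof. rewrite big_ord_recr big_ord_recr big_ord0 /= add0r. congr (F _ + F _); exact: val_inj. Qed.

Lemma pv_refl1 (c : 'I_2 -> 'I_2 -> int) v : c i1 i1 = 2 ->
  pv (refl c i1 v) = (- v i1 - c i1 i2 * v i2, v i2).
Proof. move=> h; rewrite /pv /refl !ffunE !ffunMzE !ffunE sum2 h /=. congr (_, _); lia. Qed.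
Lemma pv_refl2 (c : 'I_2 -> 'I_2 -> int) v : c i2 i2 = 2 ->
  pv (refl c i2 v) = (v i1, - c i2 i1 * v i1 - v i2).
Proof. move=> h; rewrite /pv /refl !ffunE !ffunMzE !ffunE sum2 h /=. congr (_, _); lia. Qed.

Lemma pv_opp v : pv (- v) = (- v i1, - v i2).
Proof. by rewrite /pv !ffunE. Qed.

Definition stepP (a b d : int) (o i : bool) (p : int * int) : int * int :=
  if i then (p.1, - (if o then d else b) * p.1 - p.2) else (- p.1 - a * p.2, p.2).
Definition rhoB (i o : bool) : bool := if i then o else ~~ o.
Definition unitP (i : bool) : int * int := if i then (0, 1) else (1, 0).
Fixpoint walkP a b d (o : bool) (w : seq bool) (p : int * int) : int * int :=
  if w is i :: w' then walkP a b d (rhoB i o) w' (stepP a b d o i p) else p.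
Fixpoint endo (o : bool) (w : seq bool) : bool :=
  if w is i :: w' then endo (rhoB i o) w' else o.
Fixpoint candsP a b d (o : bool) (w : seq bool) : seq (int * int) :=
  if w is i :: w' then unitP i :: map (stepP a b d (rhoB i o) i) (candsP a b d (rhoB i o) w')
  else [::].
Definition nonnegP (p : int * int) := (0 <= p.1) && (0 <= p.2).
Definition negcheck a b d o w :=
  let e := walkP a b d o w (1, 0) in let f := walkP a b d o w (0, 1) in
  [&& e.1 <= 0, e.2 <= 0, f.1 <= 0 & f.2 <= 0].

Lemma rhoBK i o : rhoB i (rhoB i o) = o.
Proof. by case: i; case: o. Qed.

Lemma stepPK a b d o i p : stepP a b d (rhoB i o) i (stepP a b d o i p) = p.
Proof. case: p => p1 p2; case: i; case: o => /=; congr (_, _); ring. Qed.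

Lemma stepP_inj a b d o i : injective (stepP a b d o i).
Proof. move=> p q e; by rewrite -(stepPK a b d o i p) e stepPK. Qed.

Lemma walkP_inj a b d o w : injective (walkP a b d o w).
Proof.
elim: w o => [|i w IH] o p q //= e.
exact: (stepP_inj (IH _ _ _ e)).
Qed.

Lemma walkP_mat a b d o w : exists m11 m12 m21 m22, forall p1 p2,
  walkP a b d o w (p1, p2) = (p1 * m11 + p2 * m12, p1 * m21 + p2 * m22).
Proof.
elim: w o => [|i w IH] o /=.
  by exists 1, 0, 0, 1 => p1 p2; congr (_, _); ring.
case: i => /=.
  have [n11 [n12 [n21 [n22 H]]]] := IH o.
  exists (n11 - (if o then d else b) * n12), (- n12), (n21 - (if o then d else b) * n22), (- n22).
  by move=> p1 p2; rewrite H; congr (_, _); ring.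
have [n11 [n12 [n21 [n22 H]]]] := IH (~~ o).
exists (- n11), (- a * n11 + n12), (- n21), (- a * n21 + n22).
by move=> p1 p2; rewrite H; congr (_, _); ring.
Qed.

Lemma walkP_lin a b d o w p1 p2 :
  walkP a b d o w (p1, p2) =
  (p1 * (walkP a b d o w (1, 0)).1 + p2 * (walkP a b d o w (0, 1)).1,
   p1 * (walkP a b d o w (1, 0)).2 + p2 * (walkP a b d o w (0, 1)).2).
Proof.
have [m11 [m12 [m21 [m22 H]]]] := walkP_mat a b d o w.
rewrite !H /=; congr (_, _); ring.
Qed.

Lemma negcheck_ok a b d o w p : negcheck a b d o w -> nonnegP p -> p != (0, 0) ->
  ~~ nonnegP (walkP a b d o w p).
Proof.
case: p => p1 p2; rewrite /negcheck /nonnegP /= => /and4P[h1 h2 h3 h4] /andP[q1 q2] nz.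
apply/negP => /andP[]; rewrite walkP_lin /= => r1 r2.
have e1 : p1 * (walkP a b d o w (1, 0)).1 + p2 * (walkP a b d o w (0, 1)).1 = 0 by nra.
have e2 : p1 * (walkP a b d o w (1, 0)).2 + p2 * (walkP a b d o w (0, 1)).2 = 0 by nra.
have : walkP a b d o w (p1, p2) = walkP a b d o w (0, 0).
  by rewrite walkP_lin e1 e2 walkP_lin; congr (_, _); ring.
by move/walkP_inj => e; rewrite e eqxx in nz.
Qed.
Definition mat := ((int * int) * (int * int))%type.
Definition app (M : mat) (v : int * int) : int * int :=
  (M.1.1 * v.1 + M.1.2 * v.2, M.2.1 * v.1 + M.2.2 * v.2).
Definition mmul (M N : mat) : mat :=
  ((M.1.1 * N.1.1 + M.1.2 * N.2.1, M.1.1 * N.1.2 + M.1.2 * N.2.2),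
   (M.2.1 * N.1.1 + M.2.2 * N.2.1, M.2.1 * N.1.2 + M.2.2 * N.2.2)).
Definition mid : mat := ((1, 0), (0, 1)).
Definition mpow (M : mat) k := iter k (mmul M) mid.

Lemma iter_app M k v : iter k (app M) v = app (mpow M k) v.
Proof.
elim: k v => [|k IH] v /=; first by case: v => v1 v2; rewrite /app /=; congr (_, _); ring.
rewrite IH /app /mmul /=; congr (_, _); ring.
Qed.

Fixpoint chebp (t dl : int) (k : nat) : int * int :=
  if k is k'.+1 then let: (u, v) := chebp t dl k' in (v, t * v - dl * u) else (0, 1).

Definition trM (M : mat) := M.1.1 + M.2.2.
Definition detM (M : mat) := M.1.1 * M.2.2 - M.1.2 * M.2.1.

Lemma mpow_cheb (M : mat) k :
  mpow M k.+1 = (((chebp (trM M) (detM M) k).2 * M.1.1 - detM M * (chebp (trM M) (detM M) k).1,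
                  (chebp (trM M) (detM M) k).2 * M.1.2),
                 ((chebp (trM M) (detM M) k).2 * M.2.1,
                  (chebp (trM M) (detM M) k).2 * M.2.2 - detM M * (chebp (trM M) (detM M) k).1)).
Proof.
elim: k => [|k IH].
  rewrite /mpow /= /mmul /=. case: M => [[p q] [r s]] /=; congr ((_, _), (_, _)); ring.
have -> : mpow M k.+2 = mmul M (mpow M k.+1) by []. rewrite IH.
rewrite [chebp _ _ k.+1]/=.
case: (chebp _ _ k) => u v /=.
rewrite /mmul /= /trM /detM; case: M {IH} => [[p q] [r s]] /=; congr ((_, _), (_, _)); ring.
Qed.

Lemma cheb_grow (t : int) k : 2 <= `|t| ->
  `|(chebp t 1 k).1| < `|(chebp t 1 k).2|.
Proof.
move=> ht; elim: k => [|k IH] /=; first by rewrite normr0 normr1.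
case: (chebp t 1 k) IH => u v /= IH.
rewrite mul1r.
have h1 : `|t * v| <= `|t * v - u| + `|u|.
  by rewrite -[X in `|X|](subrK u) ler_normD.
rewrite normrM in h1.
have h0 : 0 <= `|v| by [].
nra.
Qed.

Lemma finite_order (M : mat) k :
  mpow M k.+1 = mid -> M.1.1 * M.2.2 - M.1.2 * M.2.1 = 1 ->
  `|M.1.1 + M.2.2| <= 1 \/ [/\ M.1.2 = 0, M.2.1 = 0 & M.1.1 = M.2.2].
Proof.
move=> hM hdet; rewrite mpow_cheb /detM /trM /= hdet in hM.
case: (lerP `|M.1.1 + M.2.2| 1) => ht; [by left | right].
have ht2 : 2 <= `|M.1.1 + M.2.2| by lia.
have := cheb_grow k ht2.
case: (chebp (M.1.1 + M.2.2) 1 k) hM => u v /= [e1 e2 e3 e4] hg.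
have hv : v != 0 by apply/eqP => hv0; rewrite hv0 normr0 in hg; have := normr_ge0 u; lia.
split.
- by move/eqP: e2; rewrite mulf_eq0 (negbTE hv) => /eqP.
- by move/eqP: e3; rewrite mulf_eq0 (negbTE hv) => /eqP.
- have : v * (M.1.1 - M.2.2) = 0 by rewrite mulrBr; lia.
  by move/eqP; rewrite mulf_eq0 (negbTE hv) subr_eq0 => /eqP.
Qed.

Lemma pigeon (T : eqType) (f : T -> T) (s : seq T) e :
  injective f -> (forall z, z \in s -> f z \in s) -> e \in s ->
  exists2 n, (0 < n)%N & iter n f e = e.
Proof.
move=> finj fs es.
pose l := [seq iter k f e | k <- iota 0 (size s).+1].
have sub : {subset l <= s}.
  move=> z /mapP [k _ ->]; elim: k => //= k IH; exact: fs.
have : ~~ uniq l.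
  apply/negP => ul; have := uniq_leq_size ul sub.
  by rewrite size_map size_iota ltnn.
case/(uniqPn e) => i [j [lij jl]].
rewrite size_map size_iota in jl.
rewrite !(nth_map 0%N) ?size_iota ?(ltn_trans lij) // !nth_iota ?(ltn_trans lij) // !add0n.
move=> eij; exists (j - i)%N; first by rewrite subn_gt0.
have H : forall i0 X, iter i0 f X = iter i0 f e -> X = e.
  by elim=> //= i0 IH X h; apply: IH; exact: finj.
apply: (H i); by rewrite -iterD subnKC ?(ltnW lij).
Qed.

Lemma iter_mul (T : Type) (f : T -> T) e n k : iter n f e = e -> iter (n * k) f e = e.
Proof. move=> h; elim: k => [|k IH]; first by rewrite muln0. by rewrite mulnS iterD IH h. Qed.
Lemma arith_bound (a b d : int) : a <= 0 -> b <= 0 -> d <= 0 -> (a = 0 <-> b = 0) -> (a = 0 <-> d = 0) ->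
  (`|a * a * b * d - 2 * a * b - 2 * a * d + 2| <= 1 \/
    [/\ - a * a * d + 2 * a = 0, - b + d * (a * b - 1) = 0 &
        1 - a * d = a * a * b * d - 2 * a * b - a * d + 1]) ->
  [/\ -5 <= a, -5 <= b & -5 <= d].
Proof.
move=> ha hb hd hab had [].
- move=> h.
  have h' : -1 <= a * a * b * d - 2 * a * b - 2 * a * d + 2 <= 1.
    by have := ler_norm (a * a * b * d - 2 * a * b - 2 * a * d + 2); have := ler_normr (a * a * b * d - 2 * a * b - 2 * a * d + 2); lia.
  have [a0|an] := eqVneq a 0.
    have := proj1 hab a0; have := proj1 had a0; by split; lia.
  have bn : b <> 0 by move=> /(proj2 hab); apply/eqP.
  have dn : d <> 0 by move=> /(proj2 had); apply/eqP.
  have ha1 : a <= -1 by move/eqP: an; lia.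
  have hb1 : b <= -1 by lia.
  have hd1 : d <= -1 by lia.
  have u1 : 1 <= a * b by nia.
  have v1 : 1 <= a * d by nia.
  have au : - (a * b) <= a by nia.
  have bu : - (a * b) <= b by nia.
  have du : - (a * d) <= d by nia.
  have e : a * a * b * d - 2 * a * b - 2 * a * d + 2 = (a * b) * (a * d) - 2 * (a * b) - 2 * (a * d) + 2 by ring.
  rewrite e in h'.
  move: (a * b) (a * d) u1 v1 au bu du h' => u v u1 v1 au bu du h'.
  have hu : u <= 5.
    rewrite leNgt; apply/negP => hu.
    have [v12|v3] : v <= 2 \/ 3 <= v by lia.
    + have : v = 1 \/ v = 2 by lia.
      by case=> ev; rewrite ev in h'; lia.
    + have hp : 0 <= (u - 6) * (v - 3) by apply: mulr_ge0; lia.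
      nia.
  have hv : v <= 5.
    rewrite leNgt; apply/negP => hv.
    have [v12|v3] : u <= 2 \/ 3 <= u by lia.
    + have : u = 1 \/ u = 2 by lia.
      by case=> ev; rewrite ev in h'; lia.
    + have hp : 0 <= (v - 6) * (u - 3) by apply: mulr_ge0; lia.
      nia.
  by split; lia.
- case=> h1 h2 h3.
  have [a0|an] := eqVneq a 0.
    have := proj1 hab a0; have := proj1 had a0; by split; lia.
  have bn : b <> 0 by move=> /(proj2 hab); apply/eqP.
  have dn : d <> 0 by move=> /(proj2 had); apply/eqP.
  have ha1 : a <= -1 by move/eqP: an; lia.
  have hd1 : d <= -1 by lia.
  have hb1 : b <= -1 by lia.
  have ad2 : a * d = 2.
    have : a * (2 - a * d) = 0 by rewrite -h1; ring.
    move/eqP; rewrite mulf_eq0 (negbTE an) subr_eq0 => /eqP; done.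
  have a2 : -2 <= a by nia.
  have d2 : -2 <= d by nia.
  have bd : b = d.
    have : - b + (a * d) * b - d = 0 by rewrite -h2; ring.
    rewrite ad2; lia.
  by split; lia.
Qed.

Definition tr_abd (a b d : int) := a * a * b * d - 2 * a * b - 2 * a * d + 2.
Definition condb (a b d : int) :=
  [&& a <= 0, b <= 0, d <= 0, (a == 0) == (b == 0), (a == 0) == (d == 0) &
    (`|tr_abd a b d| <= 1) || [&& - a * a * d + 2 * a == 0, - b + d * (a * b - 1) == 0 &
        1 - a * d == a * a * b * d - 2 * a * b - a * d + 1]].
Definition rng : seq int := [:: -5; -4; -3; -2; -1; 0].
Definition goodl : seq (int * int * int) :=
  [:: (0, 0, 0); (-1, -2, -2); (-2, -1, -1); (-1, -3, -3); (-3, -1, -1);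
      (-1, -3, -4); (-1, -4, -3); (-1, -3, -5); (-1, -5, -3); (-1, -1, -1)].

Lemma enum_check : all (fun a => all (fun b => all (fun d => condb a b d ==> ((a, b, d) \in goodl)) rng) rng) rng.
Proof. by []. Qed.

Lemma in_rng (a : int) : -5 <= a -> a <= 0 -> a \in rng.
Proof.
move=> h1 h2; have : a = -5 \/ a = -4 \/ a = -3 \/ a = -2 \/ a = -1 \/ a = 0 by lia.
by case=> [->|[->|[->|[->|[->| ->]]]]].
Qed.

Lemma arith_class (a b d : int) : a <= 0 -> b <= 0 -> d <= 0 -> (a = 0 <-> b = 0) -> (a = 0 <-> d = 0) ->
  (`|a * a * b * d - 2 * a * b - 2 * a * d + 2| <= 1 \/
    [/\ - a * a * d + 2 * a = 0, - b + d * (a * b - 1) = 0 &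
        1 - a * d = a * a * b * d - 2 * a * b - a * d + 1]) ->
  (a, b, d) \in goodl.
Proof.
move=> ha hb hd hab had h.
have [ba bb bd] := arith_bound ha hb hd hab had h.
have c : condb a b d.
  rewrite /condb ha hb hd /=.
  apply/and3P; split.
  - by apply/eqP; apply/idP/idP => /eqP h0; apply/eqP; apply hab.
  - by apply/eqP; apply/idP/idP => /eqP h0; apply/eqP; apply had.
  - case: h => [h|[h1 h2 h3]]; first by rewrite /tr_abd h.
    by rewrite h1 h2 h3 !eqxx orbT.
move/allP: enum_check => /(_ a (in_rng ba ha)) /allP /(_ b (in_rng bb hb)) /allP /(_ d (in_rng bd hd)).
by rewrite c.
Qed.

Unset Implicit Arguments.
Record setup := Setup {
  sA : Type; sx : sA; sy : sA;
  sxy : sx <> sy;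
  sAx : forall a : sA, a = sx \/ a = sy;
  srho : 'I_2 -> sA -> sA;
  sC : sA -> 'I_2 -> 'I_2 -> int;
  sR : sA -> zvec 'I_2 -> Prop;
  sCs : cartan_scheme srho sC;
  srx : srho i1 sx = sy; sry : srho i1 sy = sx; sr2 : forall a, srho i2 a = a;
  sRs : root_system (srho) (sC) (sR) }.
Set Implicit Arguments.
Arguments sRs : clear implicits.


Definition obj S (o : bool) := if o then sy S else sx S.
Definition ib (i : bool) : 'I_2 := if i then i2 else i1.
Definition pa S := sC S (sx S) i1 i2.
Definition pb S := sC S (sx S) i2 i1.
Definition pd S := sC S (sy S) i2 i1.
Definition RP S o (p : int * int) := sR S (obj S o) (vec p).
Definition pneg (p : int * int) := (- p.1, - p.2).

Lemma C_diag S a i : sC S a i i = 2.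
Proof. by case: (sCs S) => /(_ a) [+ _ _]. Qed.

Lemma C12 S o : sC S (obj S o) i1 i2 = pa S.
Proof.
case: o => //=; rewrite /pa; case: (sCs S) => _ _ /(_ (sx S) i1 i2).
by rewrite srx => ->.
Qed.

Lemma rho_obj S i o : srho S (ib i) (obj S o) = obj S (rhoB i o).
Proof. by case: i; case: o => /=; rewrite ?srx ?sry ?sr2. Qed.

Lemma sigma_obj S i o v :
  pv (sigma (sC S) (ib i) (obj S o) v) = stepP (pa S) (pb S) (pd S) o i (pv v).
Proof.
rewrite [sigma _ _ _ _]/(refl (sC S (obj S o)) (ib i) v).
case: i => /=.
  by rewrite pv_refl2 ?C_diag //; case: o.
by rewrite pv_refl1 ?C_diag // C12.
Qed.

Lemma nonneg_pv v : nonneg v <-> nonnegP (pv v).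
Proof.
split; first by move=> h; rewrite /nonnegP /= !h.
by case/andP => h1 h2 j; case: (ord2 j) => ->.
Qed.

Lemma pv_neg v : pv (- v) = pneg (pv v).
Proof. by rewrite pv_opp. Qed.

Lemma R_sign S a v : sR S a v -> nonneg v \/ nonneg (- v).
Proof. by case: (sRs S) => /(_ a v) h _ _ _ /h [[]|[]]; auto. Qed.

Lemma R_opp S a v : sR S a v -> sR S a (- v).
Proof.
case: (sRs S) => h1 _ _ _ hv.
have := hv; move/h1 => [[_ nv]|[hv' _]] //.
by apply/h1; right; rewrite opprK.
Qed.

Lemma R_simple S a i v : sR S a v -> (exists k : int, v = alpha i *~ k) -> v = alpha i \/ v = - alpha i.
Proof. by case: (sRs S) => _ h2 _ _ hv hk; apply: (proj1 (h2 a i v)); split. Qed.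

Lemma R_alpha S a i : sR S a (alpha i).
Proof. by case: (sRs S) => _ h2 _ _; have [_ /(_ (or_introl erefl)) []] := h2 a i (alpha i). Qed.

Lemma R3f S a i v : sR S a v -> sR S (srho S i a) (sigma (sC S) i a v).
Proof. by case: (sRs S) => _ _ h3 _ hv; apply/h3; exists v. Qed.

Lemma vec_pv p v : vec p = v <-> p = pv v.
Proof. by split => [<-|->]; rewrite ?vecK ?pvK. Qed.

Lemma RP_step S o i p : RP S o p -> RP S (rhoB i o) (stepP (pa S) (pb S) (pd S) o i p).
Proof.
rewrite /RP => /(R3f (ib i)); rewrite rho_obj.
by have -> : sigma (sC S) (ib i) (obj S o) (vec p) = vec (stepP (pa S) (pb S) (pd S) o i p)
  by apply/esym/vec_pv; rewrite sigma_obj vecK.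
Qed.

Lemma RP_opp S o p : RP S o p -> RP S o (pneg p).
Proof.
rewrite /RP => /R_opp; have -> // : - vec p = vec (pneg p).
by apply/esym/vec_pv; rewrite pv_neg vecK.
Qed.

Lemma RP_sign S o p : RP S o p -> nonnegP p \/ nonnegP (pneg p).
Proof.
rewrite /RP => /R_sign [] /nonneg_pv; rewrite ?pv_neg vecK; auto.
Qed.

Lemma pv_alphaz i k : pv (alpha i *~ k) = if i == i1 then (k, 0) else (0, k).
Proof. rewrite /pv !ffunMzE !ffunE. by case: (ord2 i) => -> /=; congr (_, _); lia. Qed.

Lemma RP_nz S o p : RP S o p -> p != (0, 0).
Proof.
move=> h; apply/eqP => e; rewrite /RP e in h.
have := R_simple (i := i1) h; case.
  by exists 0; apply/vec_pv; rewrite pv_alphaz.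
all: by move/vec_pv; rewrite ?pv_neg pv_alpha1.
Qed.

Lemma RP_unit S o i : RP S o (unitP i).
Proof.
rewrite /RP; have -> : vec (unitP i) = alpha (ib i).
  by apply/vec_pv; case: i; rewrite /= ?pv_alpha1 ?pv_alpha2.
exact: R_alpha.
Qed.

Lemma pv_alpha_ib i : pv (alpha (ib i)) = unitP i.
Proof. by case: i; rewrite /= ?pv_alpha1 ?pv_alpha2. Qed.

Lemma step_pos S o i p : RP S o p -> nonnegP p -> p != unitP i ->
  nonnegP (stepP (pa S) (pb S) (pd S) o i p).
Proof.
move=> hp np nu.
have [//|nn] := RP_sign (RP_step i hp).
have h0 : (if i then p.1 else p.2) = 0.
  by case: i nn nu; case: p hp np => p1 p2 hp /andP[/= h1 h2] /andP[/= h3 h4]; lia.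
have := R_simple (i := ib i) hp; case.
- exists (if i then p.2 else p.1); apply/vec_pv; rewrite pv_alphaz.
  by case: i h0 {nn nu}; case: p {hp np} => p1 p2 /= ->.
- by move/vec_pv => e; rewrite e pv_alpha_ib eqxx in nu.
- move/vec_pv; rewrite pv_neg => e; rewrite e pv_alpha_ib in np.
  have : ~~ nonnegP (pneg (unitP i)) by case: (i).
  by rewrite np.
Qed.

Notation STEP S := (stepP (pa S) (pb S) (pd S)).
Notation WALK S := (walkP (pa S) (pb S) (pd S)).
Notation CANDS S := (candsP (pa S) (pb S) (pd S)).

Lemma path_lemma S o w p : RP S o p -> nonnegP p -> ~~ nonnegP (WALK S o w p) -> p \in CANDS S o w.
Proof.
elim: w o p => [|i w IH] o p hp np /=; first by rewrite np.
move=> hw; rewrite in_cons; case: eqP => //= /eqP nu.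
have nq := step_pos hp np nu.
have := IH _ _ (RP_step i hp) nq hw.
by move=> hq; rewrite -[p](stepPK (pa S) (pb S) (pd S) o i); apply: map_f.
Qed.

Lemma cands_R S o w p : p \in CANDS S o w -> RP S o p.
Proof.
elim: w o p => [|i w IH] o p //=; rewrite in_cons => /orP[/eqP ->|/mapP [q hq ->]].
  exact: RP_unit.
by have := RP_step i (IH _ _ hq); rewrite rhoBK.
Qed.

Lemma walk_R S o w p : RP S o p -> RP S (endo o w) (WALK S o w p).
Proof. elim: w o p => [|i w IH] o p //= hp; apply: IH; exact: RP_step. Qed.

Lemma char S o w : negcheck (pa S) (pb S) (pd S) o w -> all nonnegP (CANDS S o w) ->
  forall p, (RP S o p /\ nonnegP p) <-> p \in CANDS S o w.
Proof.
move=> hn ha p; split.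
  case=> hp np; apply: path_lemma => //; apply: negcheck_ok => //; exact: RP_nz hp.
move=> hc; split; first exact: cands_R hc.
exact: (allP ha).
Qed.

Definition alt (m : nat) : seq bool := [seq odd k | k <- iota 0 m].
Definition mlist : seq nat := [:: 2; 4; 4; 6; 6; 8; 8; 12; 12; 3]%N.
Definition mOf (t : int * int * int) : nat := nth 0%N mlist (index t goodl).
Definition checkt (t : int * int * int) :=
  all (fun o => negcheck t.1.1 t.1.2 t.2 o (alt (mOf t)) &&
                all nonnegP (candsP t.1.1 t.1.2 t.2 o (alt (mOf t)))) [:: false; true].
Lemma checkt_all : all checkt goodl.
Proof. by []. Qed.

Lemma char_good S o : (pa S, pb S, pd S) \in goodl ->
  forall p, (RP S o p /\ nonnegP p) <-> p \in CANDS S o (alt (mOf (pa S, pb S, pd S))).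
Proof.
move=> hg; have := allP checkt_all _ hg; rewrite /checkt /=.
case/andP => /andP[n1 a1] /andP[/andP[n2 a2] _].
by case: o; apply: char.
Qed.

Lemma gcm_facts S : [/\ pa S <= 0, pb S <= 0, pd S <= 0, (pa S = 0 <-> pb S = 0) & (pa S = 0 <-> pd S = 0)].
Proof.
case: (sCs S) => hg _ _.
have [_ hx1 hx2] := hg (sx S); have [_ hy1 hy2] := hg (sy S).
have e := C12 S true; rewrite /= /pa in e.
rewrite /pa /pb /pd; split.
- exact: hx1.
- exact: hx1.
- exact: hy1.
- by split; [apply: hx2|apply: hx2].
- by rewrite -e; split; [apply: hy2|apply: hy2].
Qed.

Definition w4 : seq bool := [:: false; true; false; true].

Lemma fin_class S : finite_root_system (sR S) -> (pa S, pb S, pd S) \in goodl.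
Proof.
move=> /(_ (sx S)) [s hs].
pose T := WALK S false w4.
have hT : forall p, p \in map pv s -> T p \in map pv s.
  move=> p /mapP [v hv ->]; have hr : RP S false (pv v) by rewrite /RP /= pvK; apply/hs.
  have := walk_R w4 hr; rewrite /= => h; apply/mapP; exists (vec (T (pv v))); last by rewrite vecK.
  exact/hs.
have hin : forall i, unitP i \in map pv s.
  by move=> i; apply/mapP; exists (vec (unitP i)); [apply/hs; exact: (RP_unit S false i)|rewrite vecK].
have Tinj : injective T by exact: walkP_inj.
have [n1 n1p h1] := pigeon Tinj hT (hin false).
have [n2 n2p h2] := pigeon Tinj hT (hin true).
pose M : mat := (((T (1, 0)).1, (T (0, 1)).1), ((T (1, 0)).2, (T (0, 1)).2)).
have TM : T =1 app M by case=> p1 p2; rewrite /T walkP_lin /app /=; congr (_, _); ring.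
have e1 : iter (n1 * n2) T (1, 0) = (1, 0) by apply: iter_mul.
have e2 : iter (n1 * n2) T (0, 1) = (0, 1) by rewrite mulnC; apply: iter_mul.
rewrite !(eq_iter TM) !iter_app in e1 e2.
have hN : (0 < n1 * n2)%N by rewrite muln_gt0 n1p n2p.
have hM : mpow M (n1 * n2).-1.+1 = mid.
  rewrite prednK //; move: e1 e2; case: (mpow M (n1 * n2)) => [[p q] [r t]].
  by rewrite /app /= => [[u1 u2] [u3 u4]]; rewrite /mid; congr ((_, _), (_, _)); lia.
have hdet : M.1.1 * M.2.2 - M.1.2 * M.2.1 = 1.
  rewrite /M /T /=; ring.
have := finite_order hM hdet.
have [ga gb gd gab gad] := gcm_facts S.
move=> h; apply: arith_class => //.
rewrite /M /T /= in h.
case: h => [h|[k1 k2 k3]]; [left|right].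
- by move: h; congr (`|_| <= _); ring.
- split.
  + by rewrite -k1; ring.
  + by rewrite -k2; ring.
  + by move: k3; congr (_ = _); ring.
Qed.

Lemma vec_inj : injective vec.
Proof. by move=> p q e; rewrite -(vecK p) e vecK. Qed.

Lemma mem_vec (c : seq (int * int)) v : (v \in map vec c) = (pv v \in c).
Proof. by rewrite -{1}(pvK v) (mem_map vec_inj). Qed.

Lemma r12_nonneg (v : zvec 'I_2) :
  (exists m n : nat, v = alpha i1 *+ m + alpha i2 *+ n) <-> nonneg v.
Proof.
split.
  case=> m [n ->]; apply/nonneg_pv; rewrite -/(r12 m n) pv_r12 /nonnegP /=.
  done.
move/nonneg_pv => /andP[h1 h2]; exists (absz (v i1)), (absz (v i2)).
rewrite -/(r12 _ _); apply: pv_inj; rewrite pv_r12 /pv; congr (_, _); rewrite abszE ger0_norm //.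
Qed.

Lemma not_A2 S : pa S = -1 -> pb S = -1 -> pd S = -1 -> False.
Proof.
move=> ha hb hd.
have hg : (pa S, pb S, pd S) \in goodl by rewrite ha hb hd.
have hc := char_good false hg.
rewrite ha hb hd in hc.
case: (sRs S) => _ _ _ /(_ (sx S) i1 i2 isT (map vec (candsP (-1) (-1) (-1) false (alt (mOf (-1, -1, -1)))))).
rewrite (map_inj_uniq vec_inj) size_map.
move=> /(_ isT) h.
have : iter 3 (fun b => srho S i1 (srho S i2 b)) (sx S) = sx S.
  apply: h => v; rewrite mem_vec -hc /RP /= pvK r12_nonneg nonneg_pv; tauto.
rewrite /= !sr2 !(srx, sry) => e.
by have := sxy S; rewrite e.
Qed.

Lemma fin_sub (T : eqType) (P : T -> Prop) (L : seq T) :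
  (forall v : T, P v -> v \in L) -> exists s : seq T, forall v : T, P v <-> v \in s.
Proof.
elim: L P => [|z L IH] P hP.
  by exists [::] => v; split => // /hP.
have [s hs] : exists s : seq T, forall v : T, (P v /\ v != z) <-> v \in s.
  apply: IH => v [pv nz]; by move: (hP v pv); rewrite in_cons (negbTE nz).
case: (classic (P z)) => pz.
  exists (z :: s) => v; rewrite in_cons; split.
    move=> hv; case: (eqVneq v z) => //= nz; apply/hs; split => //.
  case/orP => [/eqP -> //|/hs []//].
exists s => v; split.
  move=> hv; apply/hs; split => //; apply/eqP => e; by rewrite e in hv.
by case/hs.
Qed.

Lemma good_fin S : (pa S, pb S, pd S) \in goodl -> finite_root_system (sR S).
Proof.
move=> hg a.
have [o ->] : exists o, a = obj S o by case: (sAx S a) => ->; [exists false|exists true].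
pose c := CANDS S o (alt (mOf (pa S, pb S, pd S))).
apply: (@fin_sub _ _ (map vec (c ++ map pneg c))) => v hv.
rewrite mem_vec mem_cat.
have hr : RP S o (pv v) by rewrite /RP pvK.
case: (RP_sign hr) => hn.
  by rewrite (proj1 (char_good o hg (pv v))).
have hr' := RP_opp hr.
apply/orP; right; rewrite -[pv v](_ : pneg (pneg (pv v)) = pv v); last first.
  by case: (pv v) => p q; rewrite /pneg /= !opprK.
by apply: map_f; apply/(char_good o hg).
Qed.

Lemma C_obj_eq S o : sC S (sx S) = sC S (sy S) -> sC S (obj S o) = sC S (sx S).
Proof. by case: o. Qed.

Lemma rho_invol S i a : srho S i (srho S i a) = a.
Proof. by case: (sCs S) => _ h _; apply: h. Qed.

Lemma usual_R S (hcc : sC S (sx S) = sC S (sy S)) j ws a :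
  sR S a (foldr (refl (sC S (sx S))) (alpha j) ws).
Proof.
elim: ws a => [|i ws IH] a /=; first exact: R_alpha.
have := R3f i (IH (srho S i a)); rewrite rho_invol.
have E : sC S (srho S i a) = sC S (sx S) by case: (sAx S (srho S i a)) => ->.
by rewrite [sigma _ _ _ _]/(refl (sC S (srho S i a)) i _) E.
Qed.

Lemma cands_usual S (hcc : sC S (sx S) = sC S (sy S)) o w p :
  p \in CANDS S o w -> usual_roots (sC S (sx S)) (vec p).
Proof.
elim: w o p => [|i w IH] o p //=; rewrite in_cons => /orP[/eqP ->|/mapP [q hq ->]].
  exists [::], (ib i) => /=; apply: pv_inj; by rewrite vecK pv_alpha_ib.
have [ws [j hj]] := IH _ _ hq.
exists (ib i :: ws), j => /=; rewrite -hj.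
rewrite -(C_obj_eq (rhoB i o) hcc).
apply: pv_inj; rewrite vecK.
by rewrite -[refl _ _ _]/(sigma (sC S) (ib i) (obj S (rhoB i o)) (vec q)) sigma_obj vecK.
Qed.

Lemma refl_opp (c : 'I_2 -> 'I_2 -> int) (hc : forall i, c i i = 2) i v :
  refl c i (- v) = - refl c i v.
Proof.
apply: pv_inj; rewrite pv_neg; case: (ord2 i) => ->.
  by rewrite !pv_refl1 // /pneg /= !ffunE; congr (_, _); ring.
by rewrite !pv_refl2 // /pneg /= !ffunE; congr (_, _); ring.
Qed.

Lemma usual_neg (c : 'I_2 -> 'I_2 -> int) (hc : forall i, c i i = 2) v :
  usual_roots c v -> usual_roots c (- v).
Proof.
case=> ws [j ->]; exists (rcons ws j), j; rewrite foldr_rcons.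
have -> : refl c j (alpha j) = - alpha j.
  apply: pv_inj; rewrite pv_neg; case: (ord2 j) => ->.
    by rewrite pv_refl1 // pv_alpha1 /pneg /= !ffunE /=; congr (_, _); ring.
  by rewrite pv_refl2 // pv_alpha2 /pneg /= !ffunE /=; congr (_, _); ring.
by elim: ws => [|k ws IH] //=; rewrite -IH refl_opp.
Qed.

Lemma R_usual S (hcc : sC S (sx S) = sC S (sy S)) (hg : (pa S, pb S, pd S) \in goodl) a v :
  sR S a v <-> usual_roots (sC S (sx S)) v.
Proof.
split; last by case=> ws [j ->]; apply: usual_R.
have [o ->] : exists o, a = obj S o by case: (sAx S a) => ->; [exists false|exists true].
move=> hv; have hr : RP S o (pv v) by rewrite /RP pvK.
have hc : forall i, sC S (sx S) i i = 2 by move=> i; apply: C_diag.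
case: (RP_sign hr) => hn.
  rewrite -(pvK v); apply: (cands_usual hcc (o := o)); exact/(char_good o hg).
rewrite -[v]opprK; apply: usual_neg => //; rewrite -(pvK (- v)) pv_neg.
apply: (cands_usual hcc (o := o)); apply/(char_good o hg); split => //.
exact: RP_opp.
Qed.

Lemma pos_lemma S o (s : seq (zvec 'I_2)) : (pa S, pb S, pd S) \in goodl ->
  perm_eq (CANDS S o (alt (mOf (pa S, pb S, pd S)))) (map pv s) ->
  pos_roots_are (sR S) (obj S o) s.
Proof.
move=> hg hp v.
rewrite -(mem_map pv_inj) -(perm_mem hp) -(char_good o hg) /RP pvK nonneg_pv.
by [].
Qed.

Lemma CxCy S : pb S = pd S -> sC S (sx S) = sC S (sy S).
Proof.
move=> e; apply: functional_extensionality => i; apply: functional_extensionality => j.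
have e12 := C12 S true; rewrite /= /pa in e12.
case: (ord2 i) => ->; case: (ord2 j) => ->; rewrite ?C_diag //.
Qed.

Definition c1check := all (fun a => all (fun b =>
   ((a <= 0) && (b <= 0) && (((a == 0) && (b == 0)) || (a * b == 2) || (a * b == 3))) ==> ((a, b, b) \in goodl)) rng) rng.
Lemma c1check_ok : c1check. Proof. by []. Qed.

Lemma case1_arith (a b : int) : a <= 0 -> b <= 0 -> ((a = 0 /\ b = 0) \/ a * b = 2 \/ a * b = 3) ->
  (a, b, b) \in goodl.
Proof.
move=> ha hb h.
have [ba bb] : -5 <= a /\ -5 <= b.
  case: h => [[-> ->]|h']; first by split.
  have hab : 2 <= a * b <= 3 by case: h' => ->.
  have b1 : b <= -1 by case: (eqVneq b 0) => [e|ne]; [rewrite e mulr0 in hab | move/eqP: ne]; lia.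
  have a1 : a <= -1 by case: (eqVneq a 0) => [e|ne]; [rewrite e mul0r in hab | move/eqP: ne]; lia.
  split; nia.
move/allP: c1check_ok => /(_ a (in_rng ba ha)) /allP /(_ b (in_rng bb hb)).
rewrite ha hb /= => /implyP; apply.
case: h => [[-> ->]|[->|->]]; by rewrite ?eqxx ?orbT.
Qed.

Lemma case_good S : (exists2 uv : sA S * sA S, (uv = (sx S, sy S) \/ uv = (sy S, sx S)) &
       (case1 (sC S) uv.1 uv.2 \/ case2 (sC S) uv.1 uv.2)) -> (pa S, pb S, pd S) \in goodl.
Proof.
have [ga gb gd _ _] := gcm_facts S.
have e12 := C12 S true; rewrite /= in e12.
case=> uv [->|->] /= [[hc h]|[h1 h2 h3 h4]].
- have ebd : pb S = pd S by rewrite /pb /pd hc.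
  rewrite -ebd; apply: case1_arith => //.
- have ha : pa S = -1 := h1. have hb : pb S = -3 := h3.
  by case: h4 => hd; [have hd' : pd S = -4 := hd | have hd' : pd S = -5 := hd]; rewrite ha hb hd'.
- have ebd : pb S = pd S by rewrite /pb /pd hc.
  rewrite ebd; apply: case1_arith => //; rewrite -ebd.
  by rewrite e12 in h; rewrite /pb -hc.
- have ha : pa S = -1 := h2. have hd : pd S = -3 := h3.
  by case: h4 => hb; [have hb' : pb S = -4 := hb | have hb' : pb S = -5 := hb]; rewrite ha hb' hd.
Qed.

Lemma good_case S : (pa S, pb S, pd S) \in goodl -> ~ (pa S = -1 /\ pb S = -1 /\ pd S = -1) ->
  exists2 uv : sA S * sA S, (uv = (sx S, sy S) \/ uv = (sy S, sx S)) &
       (case1 (sC S) uv.1 uv.2 \/ case2 (sC S) uv.1 uv.2).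
Proof.
have e12 := C12 S true; rewrite /= in e12.
rewrite /goodl !inE => hg hna.
have XY : (sx S, sy S) = (sx S, sy S) \/ (sx S, sy S) = (sy S, sx S) by left.
have YX : (sy S, sx S) = (sx S, sy S) \/ (sy S, sx S) = (sy S, sx S) by right.
repeat case/orP: hg => [/eqP [ha hb hd]|hg].
all: try by (exists (sx S, sy S) => //; left; split; [apply: CxCy; rewrite hb hd|
   rewrite /= -/(pa S) -/(pb S) ha hb; lia]).
all: try by (exists (sx S, sy S) => //; right; rewrite /case2 /= e12;
  split; try exact: ha; try exact: hb; try exact: hd;
  first [left; exact: hd|right; exact: hd|left; exact: hb|right; exact: hb]).
all: try by (exists (sy S, sx S) => //; right; rewrite /case2 /= e12;
  split; try exact: ha; try exact: hb; try exact: hd;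
  first [left; exact: hd|right; exact: hd|left; exact: hb|right; exact: hb]).
all: by exfalso; apply: hna; case/eqP: hg => -> -> ->.
Qed.

Lemma pos4 S o s : (pa S, pb S, pd S) \in goodl ->
  perm_eq (CANDS S o (alt (mOf (pa S, pb S, pd S)))) (map pv s) ->
  pos_roots_are (sR S) (obj S o) s.
Proof. exact: pos_lemma. Qed.

Theorem proposition5p1 (A : Type) (x y : A) (hxy : x <> y)
  (hA : forall a : A, a = x \/ a = y)
  (rho : 'I_2 -> A -> A) (C : A -> 'I_2 -> 'I_2 -> int)
  (R : A -> zvec 'I_2 -> Prop)
  (hC : cartan_scheme rho C)
  (hrx : rho i1 x = y) (hry : rho i1 y = x) (hr2 : forall a, rho i2 a = a)
  (hR : root_system rho C R) :
  (finite_root_system R <->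
     exists2 uv : A * A, (uv = (x, y) \/ uv = (y, x)) &
       (case1 C uv.1 uv.2 \/ case2 C uv.1 uv.2))
  /\ (forall u v : A, (u = x /\ v = y) \/ (u = y /\ v = x) ->
        (case1 C u v ->
           (forall w, R u w <-> usual_roots (C u) w) /\
           (forall w, R v w <-> usual_roots (C u) w))
        /\ (case2 C u v -> C v i2 i1 = -4 ->
              pos_roots_are R u Rx4 /\ pos_roots_are R v Ry4)
        /\ (case2 C u v -> C v i2 i1 = -5 ->
              pos_roots_are R u Rx5 /\ pos_roots_are R v Ry5)).
Proof.
pose S := @Setup A x y hxy hA rho C R hC hrx hry hr2 hR.
have e12 : C y i1 i2 = C x i1 i2 by have := C12 S true.
split.
  split.
    move=> hf; have hg := fin_class (S := S) hf.
    apply: (good_case (S := S) hg) => -[ha [hb hd]].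
    exact: (not_A2 (S := S) ha hb hd).
  move=> h; apply: (good_fin (S := S)); exact: (case_good (S := S) h).
move=> u v huv.
have hex : forall (h : case1 C u v \/ case2 C u v),
    exists2 uv : A * A, (uv = (x, y) \/ uv = (y, x)) & (case1 C uv.1 uv.2 \/ case2 C uv.1 uv.2).
  by move=> h; exists (u, v) => //; case: huv => [[-> ->]|[-> ->]]; auto.
split; [|split].
- move=> h1.
  have hg := case_good (S := S) (hex (or_introl h1)).
  have hcc : C x = C y by case: huv h1 => [[-> ->]|[-> ->]] [].
  have hCu : C u = C x by case: huv => [[-> _]|[-> _]].
  rewrite hCu; split => w; exact: (R_usual (S := S) hcc hg).
- move=> h2 h4; have hg := case_good (S := S) (hex (or_intror h2)).
  case: huv h2 h4 => [[-> ->]|[-> ->]] [h1 h1' h3 _] h4.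
  + have ha : pa S = -1 := h1. have hb : pb S = -3 := h3. have hd : pd S = -4 := h4.
    split; [apply: (pos4 (S := S) (o := false))|apply: (pos4 (S := S) (o := true))] => //;
    rewrite ha hb hd /Rx4 /Ry4 /= !pv_r12; by [].
  + have ha : pa S = -1 := h1'. have hd : pd S = -3 := h3. have hb : pb S = -4 := h4.
    split; [apply: (pos4 (S := S) (o := true))|apply: (pos4 (S := S) (o := false))] => //;
    rewrite ha hb hd /Rx4 /Ry4 /= !pv_r12; by [].
- move=> h2 h4; have hg := case_good (S := S) (hex (or_intror h2)).
  case: huv h2 h4 => [[-> ->]|[-> ->]] [h1 h1' h3 _] h4.
  + have ha : pa S = -1 := h1. have hb : pb S = -3 := h3. have hd : pd S = -5 := h4.
    split; [apply: (pos4 (S := S) (o := false))|apply: (pos4 (S := S) (o := true))] => //;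
    rewrite ha hb hd /Rx5 /Ry5 /= !pv_r12; by [].
  + have ha : pa S = -1 := h1'. have hd : pd S = -3 := h3. have hb : pb S = -5 := h4.
    split; [apply: (pos4 (S := S) (o := true))|apply: (pos4 (S := S) (o := false))] => //;
    rewrite ha hb hd /Rx5 /Ry5 /= !pv_r12; by [].
Qed.
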